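(* Let $R \in \mathrm{SO}(3)$, let $t \in \mathbb{R}^3$, and let $E = [t]_\times R$ be non-zero. Put $\tau = \operatorname{tr} R$. Then $$\frac{1}{2}(\tau^2 - 1)\operatorname{tr}(EE^{\mathrm T}) + (\tau + 1)\operatorname{tr}(E^2) - \tau\,(\operatorname{tr} E)^2 = 0.$$
   Context: For a 3-vector $a$, $[a]_\times$ denotes the $3\times 3$ skew-symmetric matrix with $[a]_\times b = a\times b$ for every $b\in\mathbb{R}^3$. *)

(* Defs.v *)
From HB Require Import structures.
From mathcomp Require Import all_boot all_order all_algebra.
Set Implicit Arguments. Unset Strict Implicit. Unset Printing Implicit Defensive.
Import Order.TTheory GRing.Theory Num.Theory.
Local Open Scope ring_scope.

(* [a]_x : the crossmx-symmetric matrix with [a]_x b = a x b, for a column vector a.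
   Indices 0,1,2 correspond to coordinates 1,2,3. *)
Definition crossmx (R : pzRingType) (a : 'cV[R]_3) : 'M[R]_3 :=
  let a0 := a (inord 0) 0 in
  let a1 := a (inord 1) 0 in
  let a2 := a (inord 2) 0 in
  \matrix_(i < 3, j < 3)
    (match nat_of_ord i, nat_of_ord j with
     | 0%N, 1%N => - a2
     | 0%N, 2%N => a1
     | 1%N, 0%N => a2
     | 1%N, 2%N => - a0
     | 2%N, 0%N => - a1
     | 2%N, 1%N => a0
     | _, _ => 0
     end).

Definition is_SO3 (R : pzRingType) (M : 'M[R]_3) : Prop :=
  M^T *m M = 1%:M /\ \det M = 1.

(* Main.v *)
Require Import Defs.
From HB Require Import structures.
From mathcomp Require Import all_boot all_order all_algebra ring.
Import Order.TTheory GRing.Theory Num.Theory.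
Local Open Scope ring_scope.

Notation o0 := (@Ordinal 3 0 isT).
Notation o1 := (@Ordinal 3 1 isT).
Notation o2 := (@Ordinal 3 2 isT).
Notation p0 := (@Ordinal 2 0 isT).
Notation p1 := (@Ordinal 2 1 isT).

Lemma sum3 (F : realFieldType) (f : 'I_3 -> F) : \sum_(i < 3) f i = f o0 + f o1 + f o2.
Proof. rewrite !big_ord_recr big_ord0 /=.
have e1 : widen_ord (m:=3) (leqnSn 2) (widen_ord (m:=2) (leqnSn 1) ord_max) = o0 by apply/val_inj.
have e2 : widen_ord (m:=3) (leqnSn 2) ord_max = o1 by apply/val_inj.
have e3 : ord_max = o2 by apply/val_inj.
rewrite e1 e2 e3. ring. Qed.

Lemma sum2 (F : realFieldType) (f : 'I_2 -> F) : \sum_(i < 2) f i = f p0 + f p1.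
Proof. rewrite !big_ord_recr big_ord0 /=.
have e1 : widen_ord (m:=2) (leqnSn 1) ord_max = p0 by apply/val_inj.
have e3 : ord_max = p1 by apply/val_inj.
rewrite e1 e3. ring. Qed.

Lemma inord0 : inord 0 = o0 :> 'I_3. Proof. by apply/val_inj; rewrite /= inordK. Qed.
Lemma inord1 : inord 1 = o1 :> 'I_3. Proof. by apply/val_inj; rewrite /= inordK. Qed.
Lemma inord2 : inord 2 = o2 :> 'I_3. Proof. by apply/val_inj; rewrite /= inordK. Qed.

Lemma det2 (F : realFieldType) (M : 'M[F]_2) : \det M = M p0 p0 * M p1 p1 - M p0 p1 * M p1 p0.
Proof.
rewrite (expand_det_row _ p0) sum2 /cofactor !det_mx11 !mxE /=.
have -> : lift p0 ord0 = p1 by apply/val_inj.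
have -> : lift p1 ord0 = p0 by apply/val_inj.
ring.
Qed.

Lemma lifts : (lift o0 p0 = o1) * (lift o0 p1 = o2) * (lift o1 p0 = o0) * (lift o1 p1 = o2)
  * (lift o2 p0 = o0) * (lift o2 p1 = o1).
Proof. by do !split; apply/val_inj. Qed.

Lemma sub0E (F : realFieldType) (a b : F) : a = b -> a - b = 0.
Proof. by move=> ->; rewrite subrr. Qed.

Lemma key (F : realFieldType) (r00 r01 r02 r10 r11 r12 r20 r21 r22 t0 t1 t2 G : F)
  (h0 : r00 * r00 + r10 * r10 + r20 * r20 = 1)
  (h1 : r00 * r00 + r01 * r01 + r02 * r02 = 1)
  (h2 : r00 * r01 + r10 * r11 + r20 * r21 = 0)
  (h3 : r00 * r10 + r01 * r11 + r02 * r12 = 0)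
  (h4 : r00 * r02 + r10 * r12 + r20 * r22 = 0)
  (h5 : r00 * r20 + r01 * r21 + r02 * r22 = 0)
  (h6 : r01 * r01 + r11 * r11 + r21 * r21 = 1)
  (h7 : r10 * r10 + r11 * r11 + r12 * r12 = 1)
  (h8 : r01 * r02 + r11 * r12 + r21 * r22 = 0)
  (h9 : r10 * r20 + r11 * r21 + r12 * r22 = 0)
  (h10 : r02 * r02 + r12 * r12 + r22 * r22 = 1)
  (h11 : r20 * r20 + r21 * r21 + r22 * r22 = 1)
  (h12 : r00 = (r11 * r22 - r12 * r21))
  (h13 : r01 = - (r10 * r22 - r12 * r20))
  (h14 : r02 = (r10 * r21 - r11 * r20))
  (h15 : r10 = - (r01 * r22 - r02 * r21))
  (h16 : r11 = (r00 * r22 - r02 * r20))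
  (h17 : r12 = - (r00 * r21 - r01 * r20))
  (h18 : r20 = (r01 * r12 - r02 * r11))
  (h19 : r21 = - (r00 * r12 - r02 * r10))
  (h20 : r22 = (r00 * r11 - r01 * r10))
  (hG : 2%:R * G = (- r22 * r22 * t1 * t1 - r22 * r22 * t0 * t0 + r22 * r22 * r22 * r22 * t1 * t1 + r22 * r22 * r22 * r22 * t0 * t0 - r21 * r21 * t1 * t1 + r21 * r21 * t0 * t0 + r21 * r21 * r22 * r22 * t1 * t1 + r21 * r21 * r22 * r22 * t0 * t0 - 4%:R * r20 * r21 * t0 * t1 + r20 * r20 * t1 * t1 - r20 * r20 * t0 * t0 + r20 * r20 * r22 * r22 * t1 * t1 + r20 * r20 * r22 * r22 * t0 * t0 + 2%:R * r12 * r22 * t1 * t2 - 2%:R * r12 * r22 * r22 * r22 * t1 * t2 + 4%:R * r12 * r21 * r22 * t0 * t0 - 4%:R * r12 * r20 * r22 * t0 * t1 - r12 * r12 * t2 * t2 + r12 * r12 * t0 * t0 + r12 * r12 * r22 * r22 * t2 * t2 + r12 * r12 * r22 * r22 * t0 * t0 - 4%:R * r11 * r22 * t0 * t0 - 4%:R * r11 * r22 * r22 * t0 * t0 + 2%:R * r11 * r22 * r22 * r22 * t1 * t1 + 2%:R * r11 * r22 * r22 * r22 * t0 * t0 + 2%:R * r11 * r21 * t1 * t2 - 2%:R * r11 * r21 * r22 * r22 * t1 * t2 + 2%:R * r11 * r21 * r21 * r22 * t1 * t1 + 2%:R * r11 * r21 * r21 * r22 * t0 * t0 + 4%:R * r11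 * r20 * t0 * t2 + 4%:R * r11 * r20 * r22 * t0 * t2 + 2%:R * r11 * r20 * r20 * r22 * t1 * t1 + 2%:R * r11 * r20 * r20 * r22 * t0 * t0 - 4%:R * r11 * r12 * r22 * r22 * t1 * t2 + 4%:R * r11 * r12 * r21 * t0 * t0 - 4%:R * r11 * r12 * r20 * t0 * t1 + 2%:R * r11 * r12 * r12 * r22 * t2 * t2 + 2%:R * r11 * r12 * r12 * r22 * t0 * t0 - r11 * r11 * t2 * t2 - r11 * r11 * t0 * t0 - 4%:R * r11 * r11 * r22 * t0 * t0 + r11 * r11 * r22 * r22 * t2 * t2 + r11 * r11 * r22 * r22 * t1 * t1 + 2%:R * r11 * r11 * r22 * r22 * t0 * t0 - 4%:R * r11 * r11 * r21 * r22 * t1 * t2 + r11 * r11 * r21 * r21 * t1 * t1 + r11 * r11 * r21 * r21 * t0 * t0 + 4%:R * r11 * r11 * r20 * t0 * t2 + r11 * r11 * r20 * r20 * t1 * t1 + r11 * r11 * r20 * r20 * t0 * t0 - 2%:R * r11 * r11 * r12 * r22 * t1 * t2 + r11 * r11 * r12 * r12 * t2 * t2 + r11 * r11 * r12 * r12 * t0 * t0 + 2%:R * r11 * r11 * r11 * r22 * t2 * t2 + 2%:R * r11 * r11 * r11 * r22 * t0 * t0 - 2%:R * r11 * r11 * r11 * r21 * t1 * t2 + r11 * r11 * r11 * r11 * t2 * t2 + r11 * r11 * r11 * r11 * t0 * t0 + 4%:R * r10 * r22 * t0 * t1 + 4%:R * r10 * r22 * r22 * t0 * t1 - 4%:R *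 r10 * r21 * r22 * t0 * t2 - 2%:R * r10 * r20 * t1 * t2 - 2%:R * r10 * r20 * r22 * r22 * t1 * t2 - 4%:R * r10 * r12 * t0 * t2 + 4%:R * r10 * r11 * r22 * t0 * t1 - 4%:R * r10 * r11 * r21 * t0 * t2 - 4%:R * r10 * r11 * r20 * r22 * t1 * t2 - 2%:R * r10 * r11 * r11 * r20 * t1 * t2 + r10 * r10 * t2 * t2 - r10 * r10 * t0 * t0 + r10 * r10 * r22 * r22 * t2 * t2 + r10 * r10 * r22 * r22 * t0 * t0 + 2%:R * r10 * r10 * r11 * r22 * t2 * t2 + 2%:R * r10 * r10 * r11 * r22 * t0 * t0 + r10 * r10 * r11 * r11 * t2 * t2 + r10 * r10 * r11 * r11 * t0 * t0 + 2%:R * r02 * r22 * t0 * t2 - 2%:R * r02 * r22 * r22 * r22 * t0 * t2 - 4%:R * r02 * r21 * r22 * t0 * t1 + 4%:R * r02 * r20 * r22 * t1 * t1 - 2%:R * r02 * r12 * t0 * t1 - 2%:R * r02 * r12 * r22 * r22 * t0 * t1 + 4%:R * r02 * r11 * t0 * t2 + 4%:R * r02 * r11 * r22 * t0 * t2 - 4%:R * r02 * r11 * r22 * r22 * t0 * t2 - 4%:R * r02 * r11 * r21 * t0 * t1 + 4%:R * r02 * r11 * r20 * t1 * t1 - 4%:R * r02 * r11 * r12 * r22 * t0 * t1 + 4%:R * r02 * r11 * r11 * t0 * t2 - 2%:R * r02 * r11 * r11 * r22 * t0 * t2 - 2%:R * r02 * r11 * r11 * r12 * t0 * t1 - 4%:R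 * r02 * r10 * r22 * t1 * t2 - 4%:R * r02 * r10 * r11 * t1 * t2 - r02 * r02 * t2 * t2 + r02 * r02 * t1 * t1 + r02 * r02 * r22 * r22 * t2 * t2 + r02 * r02 * r22 * r22 * t1 * t1 + 2%:R * r02 * r02 * r11 * r22 * t2 * t2 + 2%:R * r02 * r02 * r11 * r22 * t1 * t1 + r02 * r02 * r11 * r11 * t2 * t2 + r02 * r02 * r11 * r11 * t1 * t1 + 4%:R * r01 * r22 * t0 * t1 + 4%:R * r01 * r22 * r22 * t0 * t1 - 2%:R * r01 * r21 * t0 * t2 - 2%:R * r01 * r21 * r22 * r22 * t0 * t2 - 4%:R * r01 * r20 * r22 * t1 * t2 - 4%:R * r01 * r12 * r22 * t0 * t2 + 2%:R * r01 * r11 * t0 * t1 + 4%:R * r01 * r11 * r22 * t0 * t1 - 2%:R * r01 * r11 * r22 * r22 * t0 * t1 - 4%:R * r01 * r11 * r21 * r22 * t0 * t2 - 4%:R * r01 * r11 * r20 * t1 * t2 - 4%:R * r01 * r11 * r12 * t0 * t2 - 4%:R * r01 * r11 * r11 * r22 * t0 * t1 - 2%:R * r01 * r11 * r11 * r21 * t0 * t2 - 2%:R * r01 * r11 * r11 * r11 * t0 * t1 + 4%:R * r01 * r10 * r22 * t2 * t2 + 4%:R * r01 * r10 * r11 * t2 * t2 - 4%:R * r01 * r02 * t1 * t2 + r01 * r01 * t2 * t2 - r01 * r01 * t1 * t1 + r01 * r01 * r22 * r22 * t2 * t2 + r01 * r01 * r22 * r22 * t1 * t1 + 2%:R * r01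 * r01 * r11 * r22 * t2 * t2 + 2%:R * r01 * r01 * r11 * r22 * t1 * t1 + r01 * r01 * r11 * r11 * t2 * t2 + r01 * r01 * r11 * r11 * t1 * t1 - 4%:R * r00 * r22 * t1 * t1 - 4%:R * r00 * r22 * r22 * t1 * t1 + 2%:R * r00 * r22 * r22 * r22 * t1 * t1 + 2%:R * r00 * r22 * r22 * r22 * t0 * t0 + 4%:R * r00 * r21 * t1 * t2 + 4%:R * r00 * r21 * r22 * t1 * t2 + 2%:R * r00 * r21 * r21 * r22 * t1 * t1 + 2%:R * r00 * r21 * r21 * r22 * t0 * t0 + 2%:R * r00 * r20 * t0 * t2 - 2%:R * r00 * r20 * r22 * r22 * t0 * t2 + 2%:R * r00 * r20 * r20 * r22 * t1 * t1 + 2%:R * r00 * r20 * r20 * r22 * t0 * t0 + 4%:R * r00 * r12 * t1 * t2 + 4%:R * r00 * r12 * r22 * t1 * t2 - 4%:R * r00 * r12 * r22 * r22 * t1 * t2 + 4%:R * r00 * r12 * r21 * t0 * t0 - 4%:R * r00 * r12 * r20 * t0 * t1 + 2%:R * r00 * r12 * r12 * r22 * t2 * t2 + 2%:R * r00 * r12 * r12 * r22 * t0 * t0 - 4%:R * r00 * r11 * t2 * t2 - 4%:R * r00 * r11 * r22 * t2 * t2 - 4%:R * r00 * r11 * r22 * t1 * t1 - 4%:R * r00 * r11 * r22 * t0 * t0 + 2%:R * r00 * r11 * r22 * r22 * t1 * t1 + 2%:R * r00 * r11 * r22 * r22 * t0 * t0 + 4%:R * r00 * r11 * r21 * t1 *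 t2 - 4%:R * r00 * r11 * r21 * r22 * t1 * t2 + 2%:R * r00 * r11 * r21 * r21 * t1 * t1 + 2%:R * r00 * r11 * r21 * r21 * t0 * t0 + 4%:R * r00 * r11 * r20 * t0 * t2 - 4%:R * r00 * r11 * r20 * r22 * t0 * t2 + 2%:R * r00 * r11 * r20 * r20 * t1 * t1 + 2%:R * r00 * r11 * r20 * r20 * t0 * t0 + 4%:R * r00 * r11 * r12 * t1 * t2 - 4%:R * r00 * r11 * r12 * r22 * t1 * t2 + 2%:R * r00 * r11 * r12 * r12 * t2 * t2 + 2%:R * r00 * r11 * r12 * r12 * t0 * t0 - 4%:R * r00 * r11 * r11 * t2 * t2 + 2%:R * r00 * r11 * r11 * r22 * t2 * t2 + 2%:R * r00 * r11 * r11 * r22 * t0 * t0 - 4%:R * r00 * r11 * r11 * r21 * t1 * t2 - 2%:R * r00 * r11 * r11 * r20 * t0 * t2 + 2%:R * r00 * r11 * r11 * r11 * t2 * t2 + 2%:R * r00 * r11 * r11 * r11 * t0 * t0 + 2%:R * r00 * r10 * t0 * t1 + 4%:R * r00 * r10 * r22 * t0 * t1 - 2%:R * r00 * r10 * r22 * r22 * t0 * t1 - 4%:R * r00 * r10 * r21 * t0 * t2 - 4%:R * r00 * r10 * r20 * r22 * t1 * t2 - 4%:R * r00 * r10 * r11 * r22 * t0 * t1 - 4%:R * r00 * r10 * r11 * r20 * t1 * t2 - 2%:R * r00 * r10 * r11 * r11 * t0 * t1 + 2%:R * r00 * r10 * r10 * r22 * t2 * t2 + 2%:R * r00 * r10 *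 r10 * r22 * t0 * t0 + 2%:R * r00 * r10 * r10 * r11 * t2 * t2 + 2%:R * r00 * r10 * r10 * r11 * t0 * t0 - 4%:R * r00 * r02 * r22 * r22 * t0 * t2 - 4%:R * r00 * r02 * r21 * t0 * t1 + 4%:R * r00 * r02 * r20 * t1 * t1 - 4%:R * r00 * r02 * r12 * r22 * t0 * t1 + 4%:R * r00 * r02 * r11 * t0 * t2 - 4%:R * r00 * r02 * r11 * r22 * t0 * t2 - 4%:R * r00 * r02 * r11 * r12 * t0 * t1 - 4%:R * r00 * r02 * r10 * t1 * t2 + 2%:R * r00 * r02 * r02 * r22 * t2 * t2 + 2%:R * r00 * r02 * r02 * r22 * t1 * t1 + 2%:R * r00 * r02 * r02 * r11 * t2 * t2 + 2%:R * r00 * r02 * r02 * r11 * t1 * t1 + 4%:R * r00 * r01 * r22 * t0 * t1 - 4%:R * r00 * r01 * r21 * r22 * t0 * t2 - 4%:R * r00 * r01 * r20 * t1 * t2 - 4%:R * r00 * r01 * r12 * t0 * t2 - 4%:R * r00 * r01 * r11 * r22 * t0 * t1 - 4%:R * r00 * r01 * r11 * r21 * t0 * t2 - 4%:R * r00 * r01 * r11 * r11 * t0 * t1 + 4%:R * r00 * r01 * r10 * t2 * t2 + 2%:R * r00 * r01 * r01 * r22 * t2 * t2 + 2%:R * r00 * r01 * r01 * r22 * t1 * t1 + 2%:R * r00 * r01 * r01 * r11 * t2 * t2 + 2%:R * r00 * r01 * r01 * r11 * t1 * t1 - r00 * r00 * t2 * t2 - r00 * r00 * t1 * t1 - 4%:R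 * r00 * r00 * r22 * t1 * t1 + r00 * r00 * r22 * r22 * t2 * t2 + 2%:R * r00 * r00 * r22 * r22 * t1 * t1 + r00 * r00 * r22 * r22 * t0 * t0 + 4%:R * r00 * r00 * r21 * t1 * t2 + r00 * r00 * r21 * r21 * t1 * t1 + r00 * r00 * r21 * r21 * t0 * t0 - 4%:R * r00 * r00 * r20 * r22 * t0 * t2 + r00 * r00 * r20 * r20 * t1 * t1 + r00 * r00 * r20 * r20 * t0 * t0 + 4%:R * r00 * r00 * r12 * t1 * t2 - 2%:R * r00 * r00 * r12 * r22 * t1 * t2 + r00 * r00 * r12 * r12 * t2 * t2 + r00 * r00 * r12 * r12 * t0 * t0 - 4%:R * r00 * r00 * r11 * t2 * t2 + 2%:R * r00 * r00 * r11 * r22 * t2 * t2 + 2%:R * r00 * r00 * r11 * r22 * t1 * t1 - 2%:R * r00 * r00 * r11 * r21 * t1 * t2 - 4%:R * r00 * r00 * r11 * r20 * t0 * t2 + 2%:R * r00 * r00 * r11 * r11 * t2 * t2 + r00 * r00 * r11 * r11 * t1 * t1 + r00 * r00 * r11 * r11 * t0 * t0 - 4%:R * r00 * r00 * r10 * r22 * t0 * t1 - 2%:R * r00 * r00 * r10 * r20 * t1 * t2 - 4%:R * r00 * r00 * r10 * r11 * t0 * t1 + r00 * r00 * r10 * r10 * t2 * t2 + r00 * r00 * r10 * r10 * t0 * t0 - 2%:R * r00 * r00 * r02 * r22 * t0 * t2 - 2%:R * r00 * r00 * r02 * r12 * t0 * t1 + r00 * r00 * r02 * r02 * t2 * t2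 + r00 * r00 * r02 * r02 * t1 * t1 - 2%:R * r00 * r00 * r01 * r21 * t0 * t2 - 2%:R * r00 * r00 * r01 * r11 * t0 * t1 + r00 * r00 * r01 * r01 * t2 * t2 + r00 * r00 * r01 * r01 * t1 * t1 + 2%:R * r00 * r00 * r00 * r22 * t2 * t2 + 2%:R * r00 * r00 * r00 * r22 * t1 * t1 - 2%:R * r00 * r00 * r00 * r20 * t0 * t2 + 2%:R * r00 * r00 * r00 * r11 * t2 * t2 + 2%:R * r00 * r00 * r00 * r11 * t1 * t1 - 2%:R * r00 * r00 * r00 * r10 * t0 * t1 + r00 * r00 * r00 * r00 * t2 * t2 + r00 * r00 * r00 * r00 * t1 * t1)) : G = 0.
Proof.
suff : 2%:R * G = 0 by move/eqP; rewrite mulf_eq0 pnatr_eq0 /= => /eqP.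
rewrite hG.
apply: etrans (_ : _ = (- 2%:R * t2 * t2 + 2%:R * t0 * t0 - 4%:R * r22 * r22 * t2 * t2 + r22 * r22 * t1 * t1 + r22 * r22 * t0 * t0 + 4%:R * r21 * t1 * t2 - 4%:R * r21 * r22 * t1 * t2 + r21 * r21 * t1 * t1 + r21 * r21 * t0 * t0 - 4%:R * r12 * r22 * t1 * t2 - 4%:R * r12 * r21 * t2 * t2 - 4%:R * r12 * r21 * t1 * t1 + 2%:R * r11 * r22 * t1 * t1 + 2%:R * r11 * r22 * t0 * t0 - 2%:R * r11 * r21 * t1 * t2 - 4%:R * r11 * r12 * t1 * t2 + r11 * r11 * t2 * t2 - 2%:R * r11 * r11 * t1 * t1 - r11 * r11 * t0 * t0 + 4%:R * r10 * r21 * t0 * t2 - 2%:R * r02 * r22 * t0 * t2 - 2%:R * r02 * r12 * t0 * t1 + r02 * r02 * t2 * t2 - r02 * r02 * t0 * t0 - 2%:R * r01 * r21 * t0 * t2 - 2%:R * r01 * r11 * t0 * t1 + 2%:R * r01 * r01 * t2 * t2 + r01 * r01 * t1 * t1 - 3%:R * r01 * r01 * t0 * t0 + 2%:R * r00 * r22 * t1 * t1 + 2%:R * r00 * r22 * t0 * t0 + 2%:R * r00 * r11 * t1 * t1 + 2%:R * r00 * r11 * t0 * t0 - 2%:R * r00 * r10 * t0 * t1 + r00 * r00 * t2 * t2 + r00 * r00 * t1 * t1) * ((r00 * r00 + r10 * r10 + r20 * r20) - (1)) + (2%:R * t2 * t2 - 2%:R * t0 * t0 - 4%:R * r22 * t1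 * t1 + 5%:R * r22 * r22 * t2 * t2 + r22 * r22 * t1 * t1 + 4%:R * r21 * r22 * t1 * t2 - 4%:R * r20 * r21 * t0 * t1 - r20 * r20 * t2 * t2 + r20 * r20 * t0 * t0 + 4%:R * r12 * t1 * t2 + 2%:R * r12 * r22 * t1 * t2 + 4%:R * r12 * r21 * t2 * t2 + 4%:R * r12 * r21 * t1 * t1 + r12 * r12 * t2 * t2 + r12 * r12 * t0 * t0 - 4%:R * r11 * t2 * t2 + 2%:R * r11 * r22 * t2 * t2 - 2%:R * r11 * r22 * t0 * t0 + 4%:R * r11 * r12 * t1 * t2 + r11 * r11 * t2 * t2 + 3%:R * r11 * r11 * t1 * t1 + 2%:R * r11 * r11 * t0 * t0 + 4%:R * r10 * r22 * t0 * t1 - 4%:R * r10 * r12 * t0 * t2 - 4%:R * r10 * r11 * t0 * t1 - r10 * r10 * t2 * t2 + r10 * r10 * t0 * t0 + 2%:R * r00 * r22 * t2 * t2 - 2%:R * r00 * r22 * t0 * t0 - 2%:R * r00 * r20 * t0 * t2 + 2%:R * r00 * r11 * t2 * t2 - 2%:R * r00 * r11 * t0 * t0) * ((r00 * r00 + r01 * r01 + r02 * r02) - (1)) + (4%:R * r22 * t0 * t1 - 4%:R * r21 * r21 * t0 * t1 - 4%:R * r20 * t1 * t2 + r20 * r21 * t2 * t2 - 3%:R * r20 * r21 * t0 * t0 - 4%:R * r12 * t0 * t2 + 4%:R * r11 * r22 * t0 * t1 + 4%:R * r11 * r21 * t0 * t2 - 2%:R * r11 * r20 * t1 * t2 - 4%:R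 * r11 * r12 * t0 * t2 - 4%:R * r11 * r11 * t0 * t1 + 4%:R * r10 * r21 * t1 * t2 - 4%:R * r10 * r20 * t0 * t2 - r10 * r11 * t2 * t2 + 4%:R * r10 * r11 * t1 * t1 + 3%:R * r10 * r11 * t0 * t0 - 4%:R * r10 * r10 * t0 * t1 - 4%:R * r02 * t1 * t2 + 4%:R * r02 * r02 * t0 * t1 + 4%:R * r01 * t2 * t2 + 4%:R * r01 * t1 * t1 + 2%:R * r01 * r20 * t0 * t2 - r00 * r01 * t2 * t2 + 3%:R * r00 * r01 * t0 * t0) * ((r00 * r01 + r10 * r11 + r20 * r21) - (0)) + (- 4%:R * t0 * t1 + 4%:R * r22 * t0 * t1 - 2%:R * r22 * r22 * t0 * t1 + 2%:R * r20 * r20 * t0 * t1 - 4%:R * r11 * r22 * t0 * t1 - 2%:R * r11 * r11 * t0 * t1 - 4%:R * r10 * t1 * t1 - 2%:R * r10 * r20 * t0 * t2 + 2%:R * r10 * r10 * t0 * t1 - 4%:R * r02 * t1 * t2 - 4%:R * r02 * r22 * t1 * t2 - 4%:R * r02 * r21 * t2 * t2 - 4%:R * r02 * r21 * t1 * t1 - r02 * r12 * t2 * t2 - r02 * r12 * t0 * t0 - 4%:R * r02 * r11 * t1 * t2 + 4%:R * r02 * r10 * t0 * t2 + 4%:R * r01 * t2 * t2 - 4%:R * r01 * r21 * t1 * t2 + r01 * r11 * t2 * t2 - 3%:R * r01 * r11 * t1 * t1 - 6%:R * r01 * r11 * t0 * t0 + 4%:R * r01 * r10 * t0 * t1 - 8%:R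 * r00 * r22 * t0 * t1 - 4%:R * r00 * r21 * t0 * t2 - 2%:R * r00 * r20 * t1 * t2 + 4%:R * r00 * r12 * t0 * t2 + r00 * r10 * t2 * t2 - r00 * r10 * t1 * t1) * ((r00 * r10 + r01 * r11 + r02 * r12) - (0)) + (- 4%:R * r21 * t0 * t1 - 4%:R * r21 * r22 * t0 * t1 + 4%:R * r20 * r22 * t2 * t2 + 4%:R * r20 * r21 * t1 * t2 + 4%:R * r12 * r22 * t0 * t1 + 4%:R * r12 * r21 * t0 * t2 - 4%:R * r12 * r12 * t0 * t2 + 4%:R * r11 * t0 * t2 - 4%:R * r11 * r12 * t0 * t1 + 4%:R * r10 * r22 * t1 * t2 + 4%:R * r10 * r21 * t2 * t2 + 4%:R * r10 * r21 * t1 * t1 + 4%:R * r10 * r11 * t1 * t2 - 4%:R * r10 * r10 * t0 * t2 + 4%:R * r02 * t1 * t1 + 2%:R * r02 * r20 * t0 * t2 - 4%:R * r01 * r02 * t0 * t1 + r00 * r02 * t1 * t1 + r00 * r02 * t0 * t0) * ((r00 * r02 + r10 * r12 + r20 * r22) - (0)) + (- 2%:R * r22 * r22 * t0 * t2 - 4%:R * r21 * t0 * t1 - 4%:R * r12 * t0 * t1 + 4%:R * r11 * t0 * t2 - 4%:R * r11 * r22 * t0 * t2 - 2%:R * r11 * r11 * t0 * t2 - 4%:R * r10 * t1 * t2 + 2%:R * r10 * r10 * t0 * t2 + 4%:R * r02 * t1 * t1 - 4%:R * r02 * r22 * t2 * t2 - r02 * r22 * t1 * t1 - r02 * r22 *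 t0 * t0 - 4%:R * r02 * r21 * t1 * t2 + 2%:R * r02 * r12 * t1 * t2 + 4%:R * r01 * r11 * t1 * t2 + 4%:R * r01 * r10 * t0 * t2 - 4%:R * r00 * r22 * t0 * t2 + 4%:R * r00 * r21 * t0 * t1 - 4%:R * r00 * r11 * t0 * t2) * ((r00 * r20 + r01 * r21 + r02 * r22) - (0)) + (t2 * t2 - t0 * t0 + 4%:R * r22 * t1 * t1 - 4%:R * r22 * r22 * t2 * t2 - 4%:R * r21 * r22 * t1 * t2 + 4%:R * r20 * r21 * t0 * t1 - r20 * r20 * t2 * t2 - r20 * r20 * t1 * t1 + 2%:R * r20 * r20 * t0 * t0 - 4%:R * r12 * t1 * t2 - 2%:R * r12 * r22 * t1 * t2 - 4%:R * r12 * r21 * t2 * t2 - 4%:R * r12 * r21 * t1 * t1 - r12 * r12 * t2 * t2 - r12 * r12 * t0 * t0 + 2%:R * r11 * r22 * t1 * t1 + 2%:R * r11 * r22 * t0 * t0 - 4%:R * r11 * r12 * t1 * t2 - r11 * r11 * t2 * t2 + r11 * r11 * t1 * t1 + 4%:R * r11 * r11 * t0 * t0 - 4%:R * r10 * r22 * t0 * t1 - 4%:R * r10 * r21 * t0 * t2 + 4%:R * r10 * r12 * t0 * t2 - r10 * r10 * t2 * t2 - r10 * r10 * t1 * t1 + 2%:R * r10 * r10 * t0 * t0 + 4%:R * r02 * t0 * t2 - 4%:R * r00 * t2 * t2 - 4%:R * r00 * t1 * t1 + 2%:R * r00 * r22 * t1 * t1 + 2%:R * r00 * r22 * t0 * t0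 + 2%:R * r00 * r11 * t1 * t1 + 2%:R * r00 * r11 * t0 * t0) * ((r01 * r01 + r11 * r11 + r21 * r21) - (1)) + (t2 * t2 - t1 * t1 + r22 * r22 * t2 * t2 - r22 * r22 * t1 * t1 - 4%:R * r21 * t1 * t2 + r21 * r21 * t2 * t2 - 3%:R * r21 * r21 * t0 * t0 + 4%:R * r20 * r21 * t0 * t1 + 2%:R * r11 * r22 * t2 * t2 - 2%:R * r11 * r22 * t1 * t1 - 2%:R * r11 * r21 * t1 * t2 + 2%:R * r11 * r11 * t2 * t2 - r11 * r11 * t1 * t1 - 3%:R * r11 * r11 * t0 * t0 - 4%:R * r10 * r21 * t0 * t2 + 4%:R * r10 * r12 * t0 * t2 + 4%:R * r10 * r11 * t0 * t1 + 4%:R * r00 * t1 * t1 + 2%:R * r00 * r22 * t2 * t2 - 2%:R * r00 * r22 * t1 * t1 + 2%:R * r00 * r11 * t2 * t2 - 2%:R * r00 * r11 * t1 * t1) * ((r10 * r10 + r11 * r11 + r12 * r12) - (1)) + (- 4%:R * t1 * t2 - 4%:R * r21 * t1 * t1 + 4%:R * r21 * r22 * t2 * t2 + r21 * r22 * t1 * t1 + r21 * r22 * t0 * t0 + 4%:R * r21 * r21 * t1 * t2 + 4%:R * r20 * r22 * t0 * t1 - 4%:R * r12 * t2 * t2 + 2%:R * r12 * r21 * t1 * t2 + 4%:R * r11 * t1 * t2 + 4%:R * r11 * r21 * t2 * t2 + 4%:R * r11 * r21 * t1 * t1 + 3%:R * r11 * r12 * t1 * t1 + 7%:R * r11 * r12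 * t0 * t0 + 4%:R * r11 * r11 * t1 * t2 - 4%:R * r10 * r22 * t0 * t2 - 4%:R * r10 * r11 * t0 * t2 - 4%:R * r01 * t0 * t2 + 4%:R * r00 * t1 * t2) * ((r01 * r02 + r11 * r12 + r21 * r22) - (0)) + (- 2%:R * t1 * t2 - 2%:R * r22 * r22 * t1 * t2 + 4%:R * r11 * t1 * t2 - 4%:R * r11 * r22 * t1 * t2 + 4%:R * r10 * r22 * t0 * t2 + 4%:R * r10 * r11 * t0 * t2 + 4%:R * r00 * t1 * t2 - 4%:R * r00 * r22 * t1 * t2 - 4%:R * r00 * r11 * t1 * t2) * ((r10 * r20 + r11 * r21 + r12 * r22) - (0)) + (- 2%:R * t2 * t2 + t1 * t1 + t0 * t0 + r22 * r22 * t1 * t1 + r22 * r22 * t0 * t0 + 4%:R * r11 * t2 * t2 + 2%:R * r11 * r22 * t1 * t1 + 2%:R * r11 * r22 * t0 * t0 - 2%:R * r11 * r11 * t1 * t1 - 2%:R * r11 * r11 * t0 * t0 - 4%:R * r10 * r22 * t0 * t1 - 4%:R * r00 * t1 * t1 + 2%:R * r00 * r22 * t1 * t1 + 2%:R * r00 * r22 * t0 * t0 + 2%:R * r00 * r11 * t1 * t1 + 2%:R * r00 * r11 * t0 * t0) * ((r02 * r02 + r12 * r12 + r22 * r22) - (1)) + (- 4%:R * t2 * t2 - 4%:R * t1 * t1 + 4%:R * r22 * t2 * t2 + 4%:R * r22 * t0 * t0 + 4%:R * r21 * t1 * t2 + 4%:R * r21 * r21 * t2 * t2 + 4%:R * r21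 * r21 * t1 * t1 + 4%:R * r20 * r21 * t0 * t1 + 4%:R * r12 * t1 * t2 + 4%:R * r12 * r21 * t0 * t0 + 4%:R * r11 * t1 * t1 + 4%:R * r11 * t0 * t0 - 4%:R * r11 * r22 * t2 * t2 - 4%:R * r11 * r22 * t1 * t1 - 4%:R * r11 * r22 * t0 * t0 + 4%:R * r10 * t0 * t1 - 4%:R * r10 * r21 * t0 * t2) * ((r00) - ((r11 * r22 - r12 * r21))) + (4%:R * r22 * t0 * t1 + 4%:R * r22 * r22 * t0 * t1 - 4%:R * r21 * t0 * t2 + 4%:R * r21 * r22 * t0 * t2 + 4%:R * r21 * r21 * t0 * t1 - 4%:R * r20 * r22 * t1 * t2 - 4%:R * r20 * r21 * t2 * t2 - 4%:R * r20 * r21 * t1 * t1 - 4%:R * r12 * r22 * t0 * t2 + 4%:R * r12 * r21 * t0 * t1 + 4%:R * r11 * t0 * t1 - 4%:R * r11 * r21 * t0 * t2 - 4%:R * r11 * r20 * t1 * t2 + 4%:R * r10 * r22 * t2 * t2 + 4%:R * r10 * r21 * t1 * t2) * ((r01) - (- (r10 * r22 - r12 * r20))) + (4%:R * t0 * t2 - 4%:R * r21 * r21 * t0 * t2 + 4%:R * r20 * r21 * t1 * t2 + 4%:R * r11 * t0 * t2 - 4%:R * r11 * r21 * t0 * t1 + 4%:R * r11 * r20 * t1 * t1) * ((r02) - ((r10 * r21 - r11 * r20)))) _; first ring.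
rewrite (sub0E _ _ _ h0).
rewrite (sub0E _ _ _ h1).
rewrite (sub0E _ _ _ h2).
rewrite (sub0E _ _ _ h3).
rewrite (sub0E _ _ _ h4).
rewrite (sub0E _ _ _ h5).
rewrite (sub0E _ _ _ h6).
rewrite (sub0E _ _ _ h7).
rewrite (sub0E _ _ _ h8).
rewrite (sub0E _ _ _ h9).
rewrite (sub0E _ _ _ h10).
rewrite (sub0E _ _ _ h12).
rewrite (sub0E _ _ _ h13).
rewrite (sub0E _ _ _ h14).
ring.
Qed.
Theorem proposition1 (F : realFieldType) (R : 'M[F]_3) (t : 'cV[F]_3) :
  is_SO3 R ->
  crossmx t *m R != 0 ->
  (2%:R)^-1 * ((\tr R) ^+ 2 - 1) * \tr ((crossmx t *m R) *m (crossmx t *m R)^T)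
    + (\tr R + 1) * \tr ((crossmx t *m R) *m (crossmx t *m R))
    - \tr R * (\tr (crossmx t *m R)) ^+ 2 = 0.
Proof.
move=> [HR hdet] _.
have HR' : R *m R^T = 1%:M by apply: mulmx1C.
have Hadj : \adj R = R^T.
  by rewrite -[\adj R]mul1mx -HR -mulmxA mul_mx_adj hdet mulmx1.
apply: (key F (R o0 o0) (R o0 o1) (R o0 o2) (R o1 o0) (R o1 o1) (R o1 o2) (R o2 o0) (R o2 o1) (R o2 o2) (t o0 0) (t o1 0) (t o2 0)).
- have := congr1 (fun M : 'M[F]_3 => M o0 o0) HR; rewrite !mxE sum3 !mxE /= => e.
  by apply: etrans (etrans _ e) _; [ring | rewrite /= ?eqxx].
- have := congr1 (fun M : 'M[F]_3 => M o0 o0) HR'; rewrite !mxE sum3 !mxE /= => e.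
  by apply: etrans (etrans _ e) _; [ring | rewrite /= ?eqxx].
- have := congr1 (fun M : 'M[F]_3 => M o0 o1) HR; rewrite !mxE sum3 !mxE /= => e.
  by apply: etrans (etrans _ e) _; [ring | rewrite /= ?eqxx].
- have := congr1 (fun M : 'M[F]_3 => M o0 o1) HR'; rewrite !mxE sum3 !mxE /= => e.
  by apply: etrans (etrans _ e) _; [ring | rewrite /= ?eqxx].
- have := congr1 (fun M : 'M[F]_3 => M o0 o2) HR; rewrite !mxE sum3 !mxE /= => e.
  by apply: etrans (etrans _ e) _; [ring | rewrite /= ?eqxx].
- have := congr1 (fun M : 'M[F]_3 => M o0 o2) HR'; rewrite !mxE sum3 !mxE /= => e.
  by apply: etrans (etrans _ e) _; [ring | rewrite /= ?eqxx].
- have := congr1 (fun M : 'M[F]_3 => M o1 o1) HR; rewrite !mxE sum3 !mxE /= => e.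
  by apply: etrans (etrans _ e) _; [ring | rewrite /= ?eqxx].
- have := congr1 (fun M : 'M[F]_3 => M o1 o1) HR'; rewrite !mxE sum3 !mxE /= => e.
  by apply: etrans (etrans _ e) _; [ring | rewrite /= ?eqxx].
- have := congr1 (fun M : 'M[F]_3 => M o1 o2) HR; rewrite !mxE sum3 !mxE /= => e.
  by apply: etrans (etrans _ e) _; [ring | rewrite /= ?eqxx].
- have := congr1 (fun M : 'M[F]_3 => M o1 o2) HR'; rewrite !mxE sum3 !mxE /= => e.
  by apply: etrans (etrans _ e) _; [ring | rewrite /= ?eqxx].
- have := congr1 (fun M : 'M[F]_3 => M o2 o2) HR; rewrite !mxE sum3 !mxE /= => e.
  by apply: etrans (etrans _ e) _; [ring | rewrite /= ?eqxx].
- have := congr1 (fun M : 'M[F]_3 => M o2 o2) HR'; rewrite !mxE sum3 !mxE /= => e.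
  by apply: etrans (etrans _ e) _; [ring | rewrite /= ?eqxx].
- have := congr1 (fun M : 'M[F]_3 => M o0 o0) Hadj; rewrite !mxE /cofactor det2 !mxE !lifts /= => e.
  by apply: etrans (esym e) _; ring.
- have := congr1 (fun M : 'M[F]_3 => M o1 o0) Hadj; rewrite !mxE /cofactor det2 !mxE !lifts /= => e.
  by apply: etrans (esym e) _; ring.
- have := congr1 (fun M : 'M[F]_3 => M o2 o0) Hadj; rewrite !mxE /cofactor det2 !mxE !lifts /= => e.
  by apply: etrans (esym e) _; ring.
- have := congr1 (fun M : 'M[F]_3 => M o0 o1) Hadj; rewrite !mxE /cofactor det2 !mxE !lifts /= => e.
  by apply: etrans (esym e) _; ring.
- have := congr1 (fun M : 'M[F]_3 => M o1 o1) Hadj; rewrite !mxE /cofactor det2 !mxE !lifts /= => e.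
  by apply: etrans (esym e) _; ring.
- have := congr1 (fun M : 'M[F]_3 => M o2 o1) Hadj; rewrite !mxE /cofactor det2 !mxE !lifts /= => e.
  by apply: etrans (esym e) _; ring.
- have := congr1 (fun M : 'M[F]_3 => M o0 o2) Hadj; rewrite !mxE /cofactor det2 !mxE !lifts /= => e.
  by apply: etrans (esym e) _; ring.
- have := congr1 (fun M : 'M[F]_3 => M o1 o2) Hadj; rewrite !mxE /cofactor det2 !mxE !lifts /= => e.
  by apply: etrans (esym e) _; ring.
- have := congr1 (fun M : 'M[F]_3 => M o2 o2) Hadj; rewrite !mxE /cofactor det2 !mxE !lifts /= => e.
  by apply: etrans (esym e) _; ring.
- rewrite /mxtrace /crossmx !(sum3, mxE) /= !(inord0, inord1, inord2).
  by field.
Qed.
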